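(* Let $n,k\in\mathbb{N}$ with at least one of $n,k$ nonzero. Then $T(n,\omega\cdot k)\le k^{n}$.
   Context: $\mathbb{N}=\{0,1,2,\dots\}$ and $[c]=\{1,\dots,c\}$. Each ordinal $\alpha$ is identified with the linearly ordered set of ordinals $\beta<\alpha$; $\omega$ is the order type of $\mathbb{N}$, and $\omega\cdot k$ is the ordinal obtained by concatenating $k$ copies of $\omega$ (its elements are $\omega\cdot b+a$ with $0\le b<k$, $a\in\mathbb{N}$). For a set $S$, $\binom{S}{n}$ denotes the set of $n$-element subsets of $S$. Two linearly ordered sets are order-equivalent ($\approx$) if there is an order-preserving bijection between them. For a linearly ordered set $S$ and $n\in\mathbb{N}$, the big Ramsey degree $T(n,S)$ is the least $t\in\mathbb{N}$ such that for every $c\ge 1$ and every coloring $\mathrm{COL}:\binom{S}{n}\to[c]$ there exists $S'\subseteq S$ with $S'\approx S$ and $|\mathrm{COL}(\binom{S'}{n})|\le t$; if no such $t$ exists, $T(n,S)=\infty$. *)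

(* Defs.v *)
From HB Require Import structures.
From mathcomp Require Import all_boot.
From mathcomp Require Import finmap.
Set Implicit Arguments. Unset Strict Implicit. Unset Printing Implicit Defensive.
Local Open Scope fset_scope.

(* The ordinal omega * k, realised as pairs (b, a) with b < k, a in nat,
   standing for omega*b + a; ordered lexicographically (strict order). *)
Definition omega_mul (k : nat) : choiceType := ('I_k * nat)%type.

Definition omega_lt (k : nat) : rel (omega_mul k) :=
  fun x y => (x.1 < y.1)%N || ((x.1 == y.1) && (x.2 < y.2)%N).

Definition order_equiv_sub (X : choiceType) (lt : rel X) (S' : X -> Prop) : Prop :=
  exists f : X -> X,
    (forall x y, lt x y -> lt (f x) (f y)) /\
    (forall x, S' (f x)) /\
    (forall y, S' y -> exists x, f x = y).

(* T(n,X) <= t iff this holds.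
   (COL is given as a total function on finite subsets; only its values on
   n-element subsets matter.) *)
Definition big_ramsey_bound (X : choiceType) (lt : rel X) (n t : nat) : Prop :=
  forall c : nat, (1 <= c)%N ->
  forall COL : {fset X} -> nat,
    (forall A : {fset X}, #|` A| = n -> (1 <= COL A <= c)%N) ->
    exists S' : X -> Prop,
      order_equiv_sub lt S' /\
      exists L : seq nat,
        (size L <= t)%N /\
        forall A : {fset X}, #|` A| = n -> (forall x, x \in A -> S' x) ->
          COL A \in L.

(* Main.v *)
Require Import Defs.
From mathcomp Require Import all_boot.
From Stdlib Require Import Classical ClassicalEpsilon.
Set Implicit Arguments. Unset Strict Implicit. Unset Printing Implicit Defensive.

Definition incr (g : nat -> nat) := forall i, g i < g i.+1.

Lemma incr_lt g : incr g -> forall a b, a < b -> g a < g b.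
Proof.
move=> Hg a; elim=> // b IH; rewrite ltnS leq_eqVlt => /orP [/eqP -> //|/IH H].
exact: ltn_trans H (Hg b).
Qed.

Lemma incr_ltE g : incr g -> forall a b, (g a < g b) = (a < b).
Proof.
move=> Hg a b; apply/idP/idP; last exact: incr_lt.
move=> H; rewrite ltnNge; apply/negP; rewrite leq_eqVlt => /orP [/eqP E|/(incr_lt Hg) H2].
  by move: H; rewrite E ltnn.
by move: (ltn_trans H H2); rewrite ltnn.
Qed.

Lemma path_map_incr g : incr g -> forall K a, path ltn (g a) (map g K) = path ltn a K.
Proof. by move=> Hg; elim=> // b K IH a /=; rewrite IH incr_ltE. Qed.

Lemma sorted_map_incr g : incr g -> forall K, sorted ltn (map g K) = sorted ltn K.
Proof. by move=> Hg [|a K] //=; rewrite path_map_incr. Qed.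

Lemma incr_comp f g : incr f -> incr g -> incr (f \o g).
Proof. by move=> Hf Hg i /=; apply: incr_lt. Qed.

Lemma preimage_list (T : Type) (U : eqType) (g : T -> U) (l : seq U) : (forall y, y \in l -> exists a, g a = y) ->
  exists K, map g K = l.
Proof.
elim: l => [|y l IH] H; first by exists [::].
have [a Ha] := H y (mem_head _ _).
have [K HK] : exists K, map g K = l by apply: IH => z Hz; apply: H; rewrite inE Hz orbT.
by exists (a :: K); rewrite /= Ha HK.
Qed.

Lemma pigeon m (v : nat -> nat) : (forall i, v i < m) ->
  exists u, forall N, exists i, N <= i /\ v i = u.
Proof.
elim: m v => [|m IH] v Hv; first by move: (Hv 0).
case: (classic (forall N, exists i, N <= i /\ v i = m)) => [H|H]; first by exists m.
have [N HN] := not_all_ex_not _ _ H.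
have Hv' : forall i, v (i + N) < m.
  move=> i; have := Hv (i + N); rewrite ltnS leq_eqVlt => /orP [/eqP E|//].
  by exfalso; apply: HN; exists (i + N); rewrite leq_addl.
have [u Hu] := IH _ Hv'; exists u => N0.
have [i [Hi Hvi]] := Hu N0; exists (i + N); split => //.
exact: leq_trans Hi (leq_addr _ _).
Qed.

Definition bounded n m (c : seq nat -> nat) :=
  forall I, sorted ltn I -> size I = n -> c I < m.

Definition homog n (c : seq nat -> nat) (h : nat -> nat) v :=
  forall I, sorted ltn I -> size I = n -> c (map h I) = v.

Definition Qp n m c (g : nat -> nat) (p : (nat -> nat) * nat) : Prop :=
  [/\ incr p.1, exists t, [/\ incr t, 0 < t 0 & forall j, p.1 j = g (t j)],
      p.2 < m & forall K, sorted ltn K -> size K = n -> c (g 0 :: map p.1 K) = p.2].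

Fixpoint iterG (F : (nat -> nat) -> (nat -> nat) * nat) i : nat -> nat :=
  if i is i'.+1 then (F (iterG F i')).1 else id.

Section Iter.
Variables (n m : nat) (c : seq nat -> nat) (F : (nat -> nat) -> (nat -> nat) * nat).
Hypothesis HF : forall g, incr g -> Qp n m c g (F g).

Local Notation G := (iterG F).

Lemma G_incr i : incr (G i).
Proof. elim: i => [j //|i IH]; by case: (HF IH). Qed.

Lemma G_range i d y : (exists a, G (i + d) a = y) -> exists a, G i a = y.
Proof.
elim: d y => [|d IH] y; first by rewrite addn0.
move=> [a Ha]; apply: IH; rewrite addnS /= in Ha.
have [_ [t [_ _ Ht]] _ _] := HF (G_incr (i + d)).
by exists (t a); rewrite -Ht.
Qed.

Definition xx i := G i 0.

Lemma xx_incr : incr xx.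
Proof.
move=> i; rewrite /xx /=.
have [_ [t [_ Ht0 Ht]] _ _] := HF (G_incr i).
by rewrite Ht; apply: incr_lt => //; apply: G_incr.
Qed.

Lemma L5 i K' : sorted ltn K' -> all (fun j => i < j) K' ->
  exists K, sorted ltn K /\ map (G i.+1) K = map xx K'.
Proof.
move=> Hs Ha.
have [K HK] : exists K, map (G i.+1) K = map xx K'.
  apply: preimage_list => y /mapP [j Hj ->].
  have Hij : i < j by move/allP: Ha => /(_ _ Hj).
  apply: (@G_range i.+1 (j - i.+1)); rewrite subnKC //.
  by exists 0.
exists K; split => //.
by rewrite -(sorted_map_incr (G_incr i.+1)) HK sorted_map_incr //; apply: xx_incr.
Qed.

Lemma iter_ramsey : exists h v, incr h /\ homog n.+1 c h v.
Proof.
pose v i := (F (G i)).2.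
have Hv : forall i, v i < m by move=> i; case: (HF (G_incr i)).
have [u Hu] := pigeon Hv.
pose next N := proj1_sig (constructive_indefinite_description _ (Hu N)).
have Hnext : forall N, N <= next N /\ v (next N) = u.
  by move=> N; rewrite /next; case: constructive_indefinite_description.
pose e := fix e j := if j is j'.+1 then next (e j').+1 else next 0.
have He : incr e by move=> j /=; case: (Hnext (e j).+1).
exists (xx \o e), u; split; first exact: incr_comp xx_incr He.
case=> [|i0 I'] //= Hs [Hsz].
have Ha : all (fun j => e i0 < j) (map e I').
  rewrite all_map; apply/allP => j Hj /=; apply: incr_lt => //.
  by move: Hs; rewrite (path_sortedE ltn_trans) => /andP [/allP /(_ _ Hj)].
have Hs' : sorted ltn (map e I') by rewrite sorted_map_incr //; exact: path_sorted Hs.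
have [K [HK1 HK2]] := L5 Hs' Ha.
rewrite -map_comp in HK2; rewrite -HK2.
have [_ _ _ H4] := HF (G_incr (e i0)).
rewrite /xx H4 //; last by rewrite -Hsz -(size_map (G (e i0).+1)) HK2 size_map.
have Hve : forall j, v (e j) = u by case=> [|j]; [case: (Hnext 0) | case: (Hnext (e j).+1)].
exact: Hve.
Qed.
End Iter.
Lemma ramsey n : forall m c, bounded n m c -> exists h v, incr h /\ homog n c h v.
Proof.
elim: n => [|n IH] m c Hc.
  exists id, (c [::]); split => // [[|]] //.
have step : forall g, exists p, incr g -> Qp n m c g p.
  move=> g; case: (classic (incr g)) => Hg; last first.
    by exists (id, 0).
  pose d s := c (g 0 :: map (g \o succn) s).
  have Hd : bounded n m d.
    move=> s Hs Hsz; rewrite /d; apply: Hc; last by rewrite /= size_map Hsz.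
    have -> : g 0 :: map (g \o succn) s = map g (0 :: map succn s) by rewrite /= map_comp.
    rewrite sorted_map_incr //= (path_sortedE ltn_trans); apply/andP; split.
      by apply/allP => x /mapP [y _ ->].
    by rewrite sorted_map_incr.
  have [h' [v [Hh' Hhom]]] := IH _ _ Hd.
  exists ((g \o succn) \o h', v) => _; split => /=.
  - exact: incr_comp (incr_comp Hg (fun i => ltnSn i.+1)) Hh'.
  - exists (succn \o h'); split => //; exact: incr_comp (fun i => ltnSn i.+1) Hh'.
  - rewrite -(Hhom (iota 0 n)) ?size_iota ?iota_ltn_sorted //; apply: Hd.
      by rewrite sorted_map_incr ?iota_ltn_sorted.
    by rewrite size_map size_iota.
  - move=> K HK HKs; rewrite map_comp -(Hhom K HK HKs) /d.
    by rewrite map_comp.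
pose F g := proj1_sig (constructive_indefinite_description _ (step g)).
apply: (@iter_ramsey n m c F) => g Hg.
rewrite /F; case: constructive_indefinite_description => p Hp; exact: Hp Hg.
Qed.

Lemma multi_ramsey n m (T : eqType) (P : seq T) (C : T -> seq nat -> nat) :
  (forall p, p \in P -> bounded n m (C p)) ->
  exists h L, incr h /\ size L <= size P /\
    forall p, p \in P -> forall I, sorted ltn I -> size I = n -> C p (map h I) \in L.
Proof.
elim: P => [|p P IH] Hb.
  by exists id, [::]; split.
have [h1 [L1 [Hh1 [HL1 H1]]]] := IH (fun c' Hc' => Hb c' (introT orP (or_intror Hc'))).
have Hb' : bounded n m (fun s => C p (map h1 s)).
  move=> I Hs Hsz; apply: (Hb p (mem_head _ _)); by rewrite ?sorted_map_incr ?size_map.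
have [h2 [v [Hh2 Hhom]]] := ramsey Hb'.
exists (h1 \o h2), (v :: L1); split; first exact: incr_comp.
split; first by [].
move=> c'; rewrite inE => /orP [/eqP ->|Hc'] I Hs Hsz.
  by rewrite map_comp Hhom ?mem_head.
rewrite map_comp inE H1 ?orbT //; by rewrite ?sorted_map_incr ?size_map.
Qed.

Lemma incr_inj g : incr g -> injective g.
Proof.
move=> Hg i j E; case: (ltngtP i j) => // H.
  by move: (incr_lt Hg H); rewrite E ltnn.
by move: (incr_lt Hg H); rewrite E ltnn.
Qed.

From mathcomp Require Import finmap.
Local Open Scope fset_scope.

Theorem theorem5p1 (n k : nat) :
  (0 < n)%N || (0 < k)%N ->
  big_ramsey_bound (@omega_lt k) n (k ^ n).
Proof.
case: k => [|k'] Hnk c Hc COL HCOL.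
  exists (fun _ => True); split.
    by exists id; split=> //; split=> // y _; exists y.
  exists [::]; split => // A HA _.
  move: HA; rewrite -[#|` A|]/(size (enum_fset A)); case: (enum_fset A) => [|x s]; last by case: x => [[]].
  by move=> /= H; rewrite -H in Hnk.
set K := k'.+1.
pose P := enum {: n.-tuple 'I_K}.
pose C (p : n.-tuple 'I_K) (s : seq nat) := COL [fset x in (zip (tval p) s : seq (omega_mul K))].
have Hb : forall p, p \in P -> bounded n c.+1 (C p).
  move=> p _ s Hs Hsz; rewrite ltnS /C.
  have Hu : uniq (zip (tval p) s).
    apply: (@map_uniq _ _ snd); rewrite -/(unzip2 _) unzip2_zip ?size_tuple ?Hsz //.
    by move: Hs; rewrite ltn_sorted_uniq_leq => /andP [].
  have Hcard : #|` [fset x in (zip (tval p) s : seq (omega_mul K))]| = n.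
    by rewrite card_fseq undup_id // size_zip size_tuple Hsz minnn.
  by case/andP: (HCOL _ Hcard).
have [h [L [Hh [HL HLin]]]] := multi_ramsey Hb.
pose f (x : omega_mul K) : omega_mul K := (x.1, h (x.2 * K + x.1)%N).
pose g (i : nat) : omega_mul K := (inord (i %% K), h i).
have Hfg : forall x, f x = g (x.2 * K + x.1)%N.
  move=> [b a]; rewrite /f /g /=; congr (_, _).
  by apply: val_inj; rewrite /= modnMDl modn_small // inordK // ltn_mod.
exists (fun y => exists x, f x = y); split.
  exists f; split; last by split=> [y|y [x Hx]]; [exists y | exists x].
  move=> [b a] [b' a']; rewrite /omega_lt /= => /orP [->//|/andP [/eqP Eb Ha]].
  apply/orP; right; rewrite Eb eqxx /=; apply: incr_lt => //.
  by rewrite ltn_add2r ltn_pmul2r.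
exists L; split.
  by apply: (leq_trans HL); rewrite /P -cardE card_tuple card_ord.
move=> A HA HAS.
have [J HJ] : exists J, map g J = enum_fset A.
  apply: preimage_list => y Hy; have [x <-] := HAS y Hy.
  by exists (x.2 * K + x.1)%N; rewrite Hfg.
have hinj : injective h := incr_inj Hh.
have Hginj : injective g by move=> i j [_ /hinj].
have HJu : uniq J by have := fset_uniq A; rewrite -HJ; apply: map_uniq.
pose I := sort leq J.
have HIs : sorted ltn I.
  by rewrite ltn_sorted_uniq_leq sort_uniq HJu sort_sorted //; exact: leq_total.
have HIsz : size I = n by rewrite size_sort -HA -(size_map g) HJ.
have Hsz : size (map (fun i => inord (i %% K) : 'I_K) I) == n by rewrite size_map HIsz.
pose p := Tuple Hsz.
have -> : A = [fset x in (zip (tval p) (map h I) : seq (omega_mul K))].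
  apply/fsetP => y; rewrite inE /= zip_map.
  have -> : (y \in A) = (y \in enum_fset A) by [].
  rewrite -HJ.
  apply/perm_mem/perm_map; rewrite perm_sym perm_sort; exact: perm_refl.
by apply: (HLin p); rewrite ?mem_enum.
Qed.
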